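(* Let $\Pi$ be a protocol on a memory set $M$ with $|M|=m$, having $n>2$ absorbing memory states, and let $\sigma\in\mathrm{br}(\Pi)$. Then there exists a protocol $\Pi'$ on some $M'\subset M$ with $|M'|=m-1$, having $n-1$ absorbing memory states, such that $U^R(\Pi)=U^R(\Pi')$ and the restriction of $\sigma$ to $M'\times\Theta$ is a best response to $\Pi'$.
   Context: Setting. The state of nature is $\theta\in\Theta=\{H,L\}$ with prior $\Pr(\theta=H)=p\in(0,1)$. A sender privately observes $\theta$; a receiver does not. $S$ is a finite signal set; conditional on $\theta$, signals are i.i.d. with distribution $\pi_\theta$ on $S$, where $\pi_\theta(s)>0$ for all $s\in S,\theta\in\Theta$, and $\pi_H\neq\pi_L$. The receiver has a finite set of memory states $M$ and chooses a protocol $\Pi=(f,g,a)$: a transition function $f:M\times S\to\Delta(M)$ ($f(i,s)(j)$ is the probability of moving from memory state $i$ to $j$ after signal $s$), an initial distribution $g\in\Delta(M)$ of $m_0$, and an action rule $a:M\to[0,1]$ (probability of action $H$ if the game ends in that memory state). A sender strategy is $\sigma:M\times\Theta\to[0,1]$, the probability of stopping in the current memory state given $\theta$. Timing: $m_0\sim g$; in each period $t=0,1,\dots$, with current memory state $m_t$, the game ends if $m_t$ is absorbing ($f(m_t,s)(m_t)=1$ for all $s$); otherwise the sender stops with probability $\sigma(m_t,\theta)$, ending the game; if not stopped, a signal $s_t\sim\pi_\theta$ is generated and $m_{t+1}\sim f(m_t,s_t)$. When the game ends in state $m_t$ the receiver takes action $H$ with probability $a(m_t)$ and $L$ otherwise.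 The receiver's payoff is $1$ if the action equals $\theta$ and $0$ otherwise; the sender's payoff is $1$ if the action is $H$ and $0$ otherwise; there is no discounting; if the game never ends both get $0$. $U^S(\Pi,\sigma),U^R(\Pi,\sigma)$ denote expected payoffs, $\mathrm{br}(\Pi)=\arg\sup_\sigma U^S(\Pi,\sigma)$ is the set of sender best responses, and $U^R(\Pi):=U^R(\Pi,\sigma)$ for $\sigma\in\mathrm{br}(\Pi)$. Since $\pi_\theta$ has full support, which transitions $i\to j$ have positive probability does not depend on $\theta$; the terms absorbing, transient, recurrent communicating class applied to $\Pi$ refer to the Markov chain on $M$ induced by $f$ with signals drawn from $\pi_\theta$ (sender never stopping), and mean the same for both $\theta$. *)

(* Defs.v *)
From HB Require Import structures.
From mathcomp Require Import all_boot all_order all_algebra.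
From mathcomp Require Import all_classical all_reals all_analysis.
Set Implicit Arguments. Unset Strict Implicit. Unset Printing Implicit Defensive.
Import Order.TTheory GRing.Theory Num.Theory.
Local Open Scope ring_scope.
Local Open Scope classical_set_scope.

Inductive Theta := TH | TL.

Section Game.
Variable R : realType.
Variable S : finType.

Definition is_dist (M : finType) (d : M -> R) : Prop :=
  (forall i, 0 <= d i) /\ \sum_i d i = 1.

Definition wf_signals (pi : Theta -> S -> R) : Prop :=
  (forall th s, 0 < pi th s) /\ (forall th, \sum_s pi th s = 1) /\ pi TH <> pi TL.

(* protocol (f, g, a) on the memory set M:
   trans i s j = f(i,s)(j), init j = g(j), act i = a(i) *)
Record protocol (M : finType) := Protocol {
  trans : M -> S -> M -> R;
  init : M -> R;
  act : M -> R }.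

Definition wf_protocol (M : finType) (P : protocol M) : Prop :=
  (forall i s, is_dist (trans P i s)) /\ is_dist (init P) /\
  (forall i, 0 <= act P i <= 1).

Definition absorbing (M : finType) (P : protocol M) (i : M) : bool :=
  [forall s, trans P i s i == 1].

(* sender strategy sigma i th = probability of stopping in state i given th *)
Definition wf_strategy (M : finType) (sigma : M -> Theta -> R) : Prop :=
  forall i th, 0 <= sigma i th <= 1.

(* Expected terminal reward r(m_end), counting only games that end within the
   first t periods (periods 0..t-1), starting from memory state i, given th. *)
Fixpoint payoff_upto (M : finType) (P : protocol M) (pi : Theta -> S -> R)
    (sigma : M -> Theta -> R) (th : Theta) (r : M -> R) (t : nat) (i : M) : R :=
  match t with
  | 0 => 0
  | t'.+1 =>
      if absorbing P i then r i
      else sigma i th * r i +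
           (1 - sigma i th) *
             \sum_s (pi th s * \sum_j (trans P i s j *
                        payoff_upto P pi sigma th r t' j))
  end.

(* Expected terminal reward (0 if the game never ends): the limit (= supremum,
   the sequence being nondecreasing and bounded) of the finite-horizon values,
   starting from m_0 ~ g. *)
Definition exp_reward (M : finType) (P : protocol M) (pi : Theta -> S -> R)
    (sigma : M -> Theta -> R) (th : Theta) (r : M -> R) : R :=
  sup (range (fun t : nat => \sum_i init P i * payoff_upto P pi sigma th r t i)).

(* Sender: payoff 1 iff action H. *)
Definition US (M : finType) (pi : Theta -> S -> R) (p : R) (P : protocol M)
    (sigma : M -> Theta -> R) : R :=
  p * exp_reward P pi sigma TH (act P) + (1 - p) * exp_reward P pi sigma TL (act P).

(* Receiver: payoff 1 iff action = state. *)
Definition UR (M : finType) (pi : Theta -> S -> R) (p : R) (P : protocol M)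
    (sigma : M -> Theta -> R) : R :=
  p * exp_reward P pi sigma TH (act P) +
  (1 - p) * exp_reward P pi sigma TL (fun i => 1 - act P i).

Definition best_response (M : finType) (pi : Theta -> S -> R) (p : R)
    (P : protocol M) (sigma : M -> Theta -> R) : Prop :=
  wf_strategy sigma /\
  forall tau, wf_strategy tau -> US pi p P tau <= US pi p P sigma.

End Game.

(* Main.v *)
Require Import Defs.
From HB Require Import structures.
From mathcomp Require Import all_boot all_order all_algebra.
From mathcomp Require Import all_classical all_reals all_analysis.
From mathcomp Require Import ring lra zify.
Import Order.TTheory GRing.Theory Num.Theory.
Local Open Scope ring_scope.

Section Aux.
Variable R : realType.

Lemma sum_sub (M : finType) (M' : {set M}) (F : M -> R) :
  \sum_(y : {x : M | x \in M'}) F (val y) = \sum_(x in M') F x.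
Proof. exact: (esym (big_sub _ F)). Qed.

Lemma redirect (M : finType) (M' : {set M}) (j i k : M) (hM : forall x, (x \in M') = (x != j)) (l : R) (hi : i != j) (hk : k != j)
  (w F : M -> R) (hF : F j = l * F i + (1-l) * F k) :
 \sum_(y : {x : M | x \in M'}) (w (val y) + (val y == i)%:R * l * w j
     + (val y == k)%:R * (1-l) * w j) * F (val y) = \sum_x w x * F x.
Proof.
rewrite (@sum_sub M M' (fun x => (w x + (x == i)%:R * l * w j
     + (x == k)%:R * (1-l) * w j) * F x)).
rewrite [RHS](bigD1 j) //= [X in _ = _ + X](eq_bigl (fun x => x \in M')); last first.
  by move=> x; rewrite hM.
have hiM : i \in M' by rewrite hM.
have hkM : k \in M' by rewrite hM.
under eq_bigr do rewrite !mulrDl.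
rewrite !big_split /=.
have E : forall a b (u : M), u \in M' -> \sum_(x in M') (x == u)%:R * a * b * F x = a * b * F u.
  move=> a b u hu; rewrite (bigD1 u) //= eqxx mul1r big1 ?addr0 //.
  by move=> x /andP[_ /negbTE ->]; rewrite !mul0r.
rewrite !E //.
rewrite hF; lra.
Qed.

Lemma between (lo x hi : R) : lo <= x <= hi ->
  exists l, 0 <= l <= 1 /\ x = l * hi + (1 - l) * lo.
Proof.
move=> /andP[h1 h2].
case: (eqVneq hi lo) => [e|ne].
  exists 1; split; first by rewrite ler01 lexx.
  rewrite e in h2 *; lra.
have hp : 0 < hi - lo by rewrite subr_gt0 lt_neqAle eq_sym ne (le_trans h1 h2).
exists ((x - lo) / (hi - lo)); split.
  apply/andP; split; first by apply: divr_ge0; lra.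
  by rewrite ler_pdivrMr // mul1r; lra.
have hn : hi - lo != 0 by rewrite gt_eqF.
by field.
Qed.
Lemma dist_zero (M : finType) (d : M -> R) (x y : M) :
  is_dist d -> d x = 1 -> y != x -> d y = 0.
Proof.
move=> [h0 h1] hx hyx.
have : \sum_(z | z != x) d z = 0.
  by move: h1; rewrite (bigD1 x) //= hx => h; lra.
by move/psumr_eq0P => -> // z _; exact: h0.
Qed.

Variable S : finType.
Variable M : finType.
Variable P : protocol R S M.
Variables (j i k : M) (l : R).
Hypothesis hwf : wf_protocol P.
Hypotheses (hi : i != j) (hk : k != j).
Hypotheses (ai : absorbing P i) (aj : absorbing P j) (ak : absorbing P k).
Hypothesis hl : 0 <= l <= 1.
Hypothesis hact : act P j = l * act P i + (1 - l) * act P k.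

Definition M' : {set M} := [set~ j].
Lemma hM x : (x \in M') = (x != j). Proof. by rewrite !inE. Qed.

Definition P' : protocol R S {x : M | x \in M'} :=
  {| trans := fun x s y => trans P (val x) s (val y) + (val y == i)%:R * l * trans P (val x) s j
        + (val y == k)%:R * (1 - l) * trans P (val x) s j;
     init := fun y => init P (val y) + (val y == i)%:R * l * init P j
        + (val y == k)%:R * (1 - l) * init P j;
     act := fun y => act P (val y) |}.

Lemma abs_one (x : M) s : absorbing P x -> trans P x s x = 1.
Proof. by move=> /forallP /(_ s) /eqP. Qed.

Lemma trans_diag y s : trans P' y s y = trans P (val y) s (val y).
Proof.
rewrite /=.
have hd := (hwf.1 (val y) s).
case: (eqVneq (val y) i) => [e|ne].
  have a' : absorbing P (val y) by rewrite e.
  by rewrite (@dist_zero _ _ _ j hd (@abs_one _ s a')) ?e 1?eq_sym // !mulr0 !addr0.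
case: (eqVneq (val y) k) => [e|ne'].
  have a' : absorbing P (val y) by rewrite e.
  by rewrite (@dist_zero _ _ _ j hd (@abs_one _ s a')) ?e 1?eq_sym // !mulr0 !addr0.
by rewrite !mul0r !addr0.
Qed.

Lemma abs_eq y : absorbing P' y = absorbing P (val y).
Proof. by apply: eq_forallb => s; rewrite trans_diag. Qed.

Lemma payoff_abs (pi : Theta -> S -> R) (tau : M -> Theta -> R) th r t x : absorbing P x ->
  payoff_upto P pi tau th r t x = if t is t'.+1 then r x else 0.
Proof. by case: t => [|t] //= ->. Qed.

Lemma redir (w F : M -> R) : F j = l * F i + (1 - l) * F k ->
 \sum_(y : {x : M | x \in M'}) (w (val y) + (val y == i)%:R * l * w j
     + (val y == k)%:R * (1-l) * w j) * F (val y) = \sum_x w x * F x.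
Proof. exact: (@redirect M M' j i k hM l hi hk w F). Qed.

Lemma payoff_eq (pi : Theta -> S -> R) (tau : M -> Theta -> R) th (r : M -> R) :
  r j = l * r i + (1 - l) * r k -> forall t y,
  payoff_upto P' pi (fun y th => tau (val y) th) th (fun y => r (val y)) t y =
  payoff_upto P pi tau th r t (val y).
Proof.
move=> hr; elim=> [|t IH] y //=.
rewrite abs_eq; case: (absorbing P (val y)) => //.
congr (_ + _ * _); apply: eq_bigr => s _; congr (_ * _).
under eq_bigr do rewrite IH.
apply: redir.
rewrite !(payoff_abs pi tau th r t) //.
by case: t {IH} => [|t]; [rewrite !mulr0; lra|].
Qed.

Lemma exp_eq (pi : Theta -> S -> R) (tau : M -> Theta -> R) th (r : M -> R) :
  r j = l * r i + (1 - l) * r k ->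
  exp_reward P' pi (fun y th => tau (val y) th) th (fun y => r (val y)) =
  exp_reward P pi tau th r.
Proof.
move=> hr; rewrite /exp_reward; f_equal; f_equal; apply: funext => t.
under eq_bigr do rewrite payoff_eq //.
apply: redir.
rewrite !(payoff_abs pi tau th r t) //.
by case: t => [|t]; [rewrite !mulr0; lra|].
Qed.

Lemma US_eq (pi : Theta -> S -> R) p (tau : M -> Theta -> R) :
  US pi p P' (fun y th => tau (val y) th) = US pi p P tau.
Proof. by rewrite /US !exp_eq. Qed.

Lemma UR_eq (pi : Theta -> S -> R) p (tau : M -> Theta -> R) :
  UR pi p P' (fun y th => tau (val y) th) = UR pi p P tau.
Proof.
rewrite /UR (exp_eq pi tau TH (act P) hact).
have h1 : (1 - act P j) = l * (1 - act P i) + (1 - l) * (1 - act P k) by rewrite hact; lra.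
by rewrite (exp_eq pi tau TL (fun x => 1 - act P x) h1).
Qed.

End Aux.

Lemma key (R : realType) (S : finType) (pi : Theta -> S -> R) (p : R)
    (M : finType) (P : protocol R S M) (m n : nat) (sigma : M -> Theta -> R) (j i k : M) :
  wf_protocol P -> i != j -> k != j -> absorbing P i -> absorbing P j -> absorbing P k ->
  act P k <= act P j <= act P i ->
  #|M| = m -> #|[set i | absorbing P i]| = n ->
  best_response pi p P sigma ->
  exists (M' : {set M}) (P' : protocol R S {x : M | x \in M'}),
    [/\ #|M'| = (m - 1)%N, wf_protocol P',
        #|[set i | absorbing P' i]| = (n - 1)%N,
        UR pi p P sigma = UR pi p P' (fun x th => sigma (val x) th)
      & best_response pi p P' (fun x th => sigma (val x) th)].
Proof.
move=> hwf hi hk ai aj ak hb hm hn [hsw hbr].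
have [l [hl hact]] := @between R _ _ _ hb.
have hUS := @US_eq R S M P j i k l hwf hi hk ai aj ak hact.
have hUR := @UR_eq R S M P j i k l hwf hi hk ai aj ak hact.
have habs := @abs_eq R S M P j i k l hwf hi hk ai ak.
exists (M' M j), (P' R S M P j i k l); split.
- by rewrite cardsC1 hm subn1.
- have [htr [hin hac]] := hwf.
  have [hl0 hl1] : 0 <= l /\ l <= 1 by move/andP: hl.
  have ge0 (w : M -> R) (y : M) : (forall x, 0 <= w x) -> 0 <= (y == i)%:R * l * w j + (y == k)%:R * (1 - l) * w j.
    move=> hw; apply: addr_ge0; apply: mulr_ge0; try apply: mulr_ge0; rewrite ?ler0n ?subr_ge0 //.
  split; [move=> y s; split|split; [split|]].
  + by move=> z /=; rewrite -addrA addr_ge0 // ?(htr _ s).1 // ge0 // => x; exact: (htr _ s).1.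
  + rewrite -(htr (val y) s).2.
    transitivity (\sum_(x:M) trans P (val y) s x * (fun _ => 1) x); last by apply: eq_bigr => *; rewrite mulr1.
    rewrite -(@redir R M j i k l hi hk (trans P (val y) s) (fun _ => 1)); last by lra.
    by apply: eq_bigr => z _; rewrite mulr1.
  + by move=> z /=; rewrite -addrA addr_ge0 // ?hin.1 // ge0 // => x; exact: hin.1.
  + rewrite -hin.2.
    transitivity (\sum_(x:M) init P x * (fun _ => 1) x); last by apply: eq_bigr => *; rewrite mulr1.
    rewrite -(@redir R M j i k l hi hk (init P) (fun _ => 1)); last by lra.
    by apply: eq_bigr => z _; rewrite mulr1.
  + by move=> y; exact: hac.
- have -> : [set y | absorbing (P' R S M P j i k l) y] = [set y | absorbing P (val y)].
    by apply/setP => y; rewrite !inE habs.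
  rewrite -(card_imset _ val_inj).
  have -> : val @: [set y : {x : M | x \in M' M j} | absorbing P (val y)] = [set x | absorbing P x] :\ j.
    apply/setP => x; rewrite !inE; apply/imsetP/andP.
    + by move=> [y]; rewrite inE => hy ->; split => //; have := valP y; rewrite hM.
    + move=> [hxj hx].
      have hxM : x \in M' M j by rewrite hM.
      by exists (exist _ x hxM); rewrite ?inE.
  have := cardsD1 j [set x | absorbing P x]; rewrite inE aj hn => ->.
  by rewrite add1n subn1.
- by rewrite hUR.
- split; first by move=> y th; exact: hsw.
  move=> tau' htau.
  pose tau := fun x th => oapp (fun y => tau' y th) 0 (insub x : option {x : M | x \in M' M j}).
  have -> : tau' = (fun y th => tau (val y) th).
    by apply: funext => y; apply: funext => th; rewrite /tau valK.
  rewrite !hUS; apply: hbr.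
  move=> x th; rewrite /tau; case: (insub x) => [y|] /=; first exact: htau.
  by rewrite lexx ler01.
Qed.

Theorem mainTheorem20 (R : realType) (S : finType) (pi : Theta -> S -> R) (p : R)
    (M : finType) (P : protocol R S M) (m n : nat) (sigma : M -> Theta -> R) :
  wf_signals pi -> 0 < p < 1 -> wf_protocol P ->
  #|M| = m -> #|[set i | absorbing P i]| = n -> (2 < n)%N ->
  best_response pi p P sigma ->
  exists (M' : {set M}) (P' : protocol R S {x : M | x \in M'}),
    [/\ #|M'| = (m - 1)%N, wf_protocol P',
        #|[set i | absorbing P' i]| = (n - 1)%N,
        UR pi p P sigma = UR pi p P' (fun x th => sigma (val x) th)
      & best_response pi p P' (fun x th => sigma (val x) th)].
Proof.
move=> _ _ hwf hm hn hn2 hbr.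
set A := [set i | absorbing P i].
have : (0 < #|A|)%N by rewrite hn; lia.
move/card_gt0P => [a ha].
have : (0 < #|A :\ a|)%N by move: (cardsD1 a A); rewrite ha hn; lia.
move/card_gt0P => [b hb].
have : (0 < #|A :\ a :\ b|)%N.
  by move: (cardsD1 a A) (cardsD1 b (A :\ a)); rewrite ha hb hn; lia.
move/card_gt0P => [c hc].
move: ha hb hc; rewrite !inE => aa /andP[hba ab] /andP[hcb /andP[hca ac]].
have hab : a != b by rewrite eq_sym.
have hac : a != c by rewrite eq_sym.
have hbc : b != c by rewrite eq_sym.
have K := fun j i k => @key R S pi p M P m n sigma j i k hwf.
case/orP: (le_total (act P a) (act P b)) => h1;
case/orP: (le_total (act P b) (act P c)) => h2;
case/orP: (le_total (act P a) (act P c)) => h3;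
first [ apply: (K a b c) => //; by rewrite ?h1 ?h2 ?h3
      | apply: (K a c b) => //; by rewrite ?h1 ?h2 ?h3
      | apply: (K b a c) => //; by rewrite ?h1 ?h2 ?h3
      | apply: (K b c a) => //; by rewrite ?h1 ?h2 ?h3
      | apply: (K c a b) => //; by rewrite ?h1 ?h2 ?h3
      | apply: (K c b a) => //; by rewrite ?h1 ?h2 ?h3 ].
Qed.
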